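(* Let $m,k,n$ be natural numbers with $n\ge k+1$, and let $V_0,\ldots,V_{m-1}$ be $G$-representations over $K$. Then a tensor $\omega\in V_{[m]}$ has rank (respectively, border rank) at most $k$ if and only if for all $m$-tuples of $G$-linear maps $\phi_i:V_i\to K[G]^n$ ($i\in[m]$) the tensor $\phi_{[m]}(\omega)$ has rank (respectively, border rank) at most $k$. Moreover, if $\omega\in V_{[m]}$ has border rank at most $k$, then there exist $m$-tuples of $G$-linear maps $\phi_i:V_i\to K[G]^k$ and $\psi_i:K[G]^k\to V_i$ such that $\psi_{[m]}(\phi_{[m]}(\omega))=\omega$.
   Context: $G$ is a finite Abelian group; $K$ is an infinite field such that every finite-dimensional $G$-representation over $K$ is a direct sum of one-dimensional irreducible representations; $G$-representations are finite-dimensional. $K[G]$ denotes the regular representation of $G$. $[m]=\{0,\ldots,m-1\}$ and $V_{[m]}=\bigotimes_{i\in[m]}V_i$. For linear maps $\phi_i:V_i\to U_i$, $\phi_{[m]}=\bigotimes_i\phi_i:V_{[m]}\to U_{[m]}$ sends $\bigotimes_i v_i\mapsto\bigotimes_i\phi_i(v_i)$. The rank of a tensor is the minimal number of pure tensors summing to it; border rank at most $k$ means lying in the Zariski closure of the set of tensors of rank at most $k$. *)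

(* Defs.v *)
From HB Require Import structures.
From mathcomp Require Import all_boot all_order all_algebra all_fingroup.
From mathcomp Require Import mxrepresentation character.
From mathcomp Require Import mpoly.
Set Implicit Arguments. Unset Strict Implicit. Unset Printing Implicit Defensive.
Import GRing.Theory.
Local Open Scope ring_scope.

Section Defs.
Variable K : fieldType.

Definition infinite_field : Prop := forall s : seq K, exists x : K, x \notin s.

Variables (gT : finGroupType) (G : {group gT}).

Definition reps_split_into_lines : Prop :=
  forall (d : nat) (rG : mx_representation K G d),
    exists (I : finType) (U : I -> 'M[K]_d),
      (forall i, mxsimple rG (U i) /\ \rank (U i) = 1%N) /\
      (\sum_i U i == 1%:M)%MS /\ mxdirect (\sum_i U i).

Definition regRep : representation K G := Representation (regular_repr K G).
Definition regRepPow (n : nat) : representation K G := muln_grepr regRep n.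

(* G-linear maps f : K^a -> K^b (row-vector convention v |-> v *m f). *)
Definition Glinear (rV rW : representation K G)
    (f : 'M[K]_(rdegree rV, rdegree rW)) : Prop :=
  forall x, x \in G -> rV x *m f = f *m rW x.
End Defs.

Section Tensors.
Variable K : fieldType.
Variable m : nat.

(* Multi-indices for V_[m] = V_0 (x) ... (x) V_{m-1}, dim V_i = d i. *)
Definition tidx (d : 'I_m -> nat) := {dffun forall i : 'I_m, 'I_(d i)}.

(* Tensors in V_[m], given by their coordinates in the product basis. *)
Definition tensor (d : 'I_m -> nat) := {ffun tidx d -> K}.

Definition pure_tensor (d : 'I_m -> nat) (v : forall i, 'rV[K]_(d i)) : tensor d :=
  [ffun j : tidx d => \prod_(i < m) v i 0 (j i)].

(* phi_[m] = (x)_i phi_i applied to a tensor (phi_i : v |-> v *m phi i). *)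
Definition tensor_map (d e : 'I_m -> nat) (phi : forall i, 'M[K]_(d i, e i))
    (w : tensor d) : tensor e :=
  [ffun j : tidx e => \sum_(a : tidx d) w a * \prod_(i < m) phi i (a i) (j i)].

Definition rank_le (d : 'I_m -> nat) (k : nat) (w : tensor d) : Prop :=
  exists u : 'I_k -> forall i, 'rV[K]_(d i),
    w = \sum_(l < k) pure_tensor (u l).

Definition tcoords (d : 'I_m -> nat) (w : tensor d) : 'I_#|{: tidx d}| -> K :=
  fun j => w (enum_val j).

(* border rank at most k: w lies in the Zariski closure of the set of tensors
   of rank at most k, i.e. every polynomial function vanishing on that set
   vanishes at w. *)
Definition border_rank_le (d : 'I_m -> nat) (k : nat) (w : tensor d) : Prop :=
  forall p : {mpoly K[#|{: tidx d}|]},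
    (forall t : tensor d, rank_le k t -> p.@[tcoords t] = 0) ->
    p.@[tcoords w] = 0.
End Tensors.

(* Main.v *)
Require Import Defs.
From HB Require Import structures.
From mathcomp Require Import all_boot all_order all_algebra all_fingroup.
From mathcomp Require Import mxrepresentation character.
From mathcomp Require Import mpoly.
Set Implicit Arguments. Unset Strict Implicit. Unset Printing Implicit Defensive.
Import GRing.Theory.
Local Open Scope ring_scope.

Section T1.
Variables (K : fieldType) (m : nat).

Lemma prod_sum_dep (d : 'I_m -> nat) (F : forall i : 'I_m, 'I_(d i) -> K) :
  \prod_(i < m) \sum_(x : 'I_(d i)) F i x =
  \sum_(a : tidx d) \prod_(i < m) F i (a i).
Proof.
pose T_ := fun i : 'I_m => 'I_(d i).
pose P_ := fun i : 'I_m => [ffun x : T_ i => F i x].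
rewrite (reindex (@dffun_of_fprod _ T_)); last first.
  by apply/onW_bij/dffun_of_fprod_bij.
transitivity (\sum_(t : fprod T_) \prod_(i in 'I_m) P_ i (t i)).
  rewrite (@big_fprod K 0 1 *%R +%R _ T_ P_).
  rewrite -(@bigA_distr_big_dep K 0 1 *%R +%R _ _ (tagged_with T_) (fun i j => untag 0 (P_ i) j)).
  apply: eq_bigr => i _.
  transitivity (\sum_(j : T_ i) P_ i j).
    by apply: eq_bigr => x _; rewrite /P_ ffunE.
  exact: (big_tag (op := +%R) (T_ := T_) P_ i).
apply: eq_bigr => t _; apply: eq_bigr => i _.
by rewrite /P_ ffunE /dffun_of_fprod ffunE.
Qed.

End T1.

Section T2.
Variables (K : fieldType) (m : nat).

Lemma tensor_map_ext (d e : 'I_m -> nat) (phi phi' : forall i, 'M[K]_(d i, e i)) w :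
  (forall i, phi i = phi' i) -> tensor_map phi w = tensor_map phi' w.
Proof.
move=> H; apply/ffunP => j; rewrite !ffunE; apply: eq_bigr => a _.
by congr (_ * _); apply: eq_bigr => i _; rewrite H.
Qed.

Lemma tensor_map_pure (d e : 'I_m -> nat) (phi : forall i, 'M[K]_(d i, e i))
   (v : forall i, 'rV[K]_(d i)) :
  tensor_map phi (pure_tensor v) = pure_tensor (fun i => v i *m phi i).
Proof.
apply/ffunP => j; rewrite !ffunE.
under eq_bigr => a _ do rewrite ffunE -big_split /=.
rewrite -(prod_sum_dep (fun i x => v i 0 x * phi i x (j i))); apply: eq_bigr => i _; rewrite mxE.
by [].
Qed.

Lemma tensor_map_sum (d e : 'I_m -> nat) (phi : forall i, 'M[K]_(d i, e i))
   k (u : 'I_k -> tensor K d) :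
  tensor_map phi (\sum_(l < k) u l) = \sum_(l < k) tensor_map phi (u l).
Proof.
apply/ffunP => j; rewrite ffunE sum_ffunE.
under eq_bigr => a _ do rewrite sum_ffunE mulr_suml.
rewrite exchange_big; apply: eq_bigr => l _; by rewrite ffunE.
Qed.

Lemma rank_le_map (d e : 'I_m -> nat) (phi : forall i, 'M[K]_(d i, e i)) k w :
  rank_le k w -> rank_le k (tensor_map phi w).
Proof.
case=> u ->; exists (fun l i => u l i *m phi i).
rewrite tensor_map_sum; apply: eq_bigr => l _; exact: tensor_map_pure.
Qed.

Lemma tensor_map_comp (d e f : 'I_m -> nat) (psi : forall i, 'M[K]_(d i, e i))
   (phi : forall i, 'M[K]_(e i, f i)) w :
  tensor_map phi (tensor_map psi w) = tensor_map (fun i => psi i *m phi i) w.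
Proof.
apply/ffunP => j; rewrite !ffunE.
transitivity (\sum_(b : tidx e) \sum_(a : tidx d)
   w a * (\prod_i psi i (a i) (b i)) * \prod_i phi i (b i) (j i)).
  by apply: eq_bigr => b _; rewrite ffunE mulr_suml.
rewrite exchange_big; apply: eq_bigr => a _.
rewrite (eq_bigr (fun i => \sum_y psi i (a i) y * phi i y (j i))); last first.
  by move=> i _; rewrite mxE.
rewrite prod_sum_dep mulr_sumr; apply: eq_bigr => b _.
by rewrite big_split /= mulrA.
Qed.

Lemma prod_eq_nat (d : 'I_m -> nat) (a j : tidx d) :
  \prod_i ((a i == j i)%:R : K) = (a == j)%:R.
Proof.
case: (eqVneq a j) => [->|neq].
  by apply: big1 => i _; rewrite eqxx.
have [i Hi] : exists i, a i != j i.
  apply/existsP; apply: contraR neq => /existsPn H.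
  by apply/eqP/ffunP => i; apply/eqP; move: (H i); rewrite negbK.
by rewrite (bigD1 i) //= (negbTE Hi) mul0r.
Qed.

Lemma tensor_map1 (d : 'I_m -> nat) (w : tensor K d) :
  tensor_map (fun i => 1%:M : 'M[K]_(d i)) w = w.
Proof.
apply/ffunP => j; rewrite ffunE.
under eq_bigr => a _ do under eq_bigr => i _ do rewrite mxE.
under eq_bigr => a _ do rewrite prod_eq_nat.
rewrite (bigD1 j) //= eqxx mulr1 big1 ?addr0 // => a /negbTE ->.
by rewrite mulr0.
Qed.

Definition upd (d : 'I_m -> nat) (a : tidx d) (i : 'I_m) (x : 'I_(d i)) : tidx d :=
  [ffun l => dfwith (fun l => a l) x l].
Arguments upd {d} a i x.

Lemma upd_at d (a : tidx d) i x : upd a i x i = x.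
Proof. by rewrite ffunE dfwith_in. Qed.

Lemma upd_out d (a : tidx d) i x l : l != i -> upd a i x l = a l.
Proof. by move=> H; rewrite ffunE dfwith_out // eq_sym. Qed.

Lemma upd_id d (a : tidx d) i : upd a i (a i) = a.
Proof.
apply/ffunP => l; case: (eqVneq l i) => [->|H]; first by rewrite upd_at.
by rewrite upd_out.
Qed.

End T2.
Arguments upd {m d} a i x.

Section T3.
Variables (K : fieldType) (m : nat).

Definition fiber (d : 'I_m -> nat) (w : tensor K d) i (a : tidx d) : 'rV[K]_(d i) :=
  \row_x w (upd a i x).

Definition single (d : 'I_m -> nat) i (P : 'M[K]_(d i)) : forall l, 'M[K]_(d l) :=
  fun l => dfwith (fun l => 1%:M : 'M[K]_(d l)) P l.

Lemma sum_upd (d : 'I_m -> nat) (j : tidx d) i (F : tidx d -> 'I_(d i) -> K) :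
  \sum_(a : tidx d) (a == upd j i (a i))%:R * F a (a i) =
  \sum_(x : 'I_(d i)) F (upd j i x) x.
Proof.
transitivity (\sum_(a : tidx d) \sum_(x : 'I_(d i)) (a == upd j i x)%:R * F a (a i)).
  apply: eq_bigr => a _; rewrite (bigD1 (a i)) //= big1 ?addr0 // => x Hx.
  case: eqP => [Ha|]; last by rewrite mul0r.
  by move: Hx; rewrite {1}Ha upd_at eqxx.
rewrite exchange_big; apply: eq_bigr => x _.
rewrite (bigD1 (upd j i x)) //= eqxx mul1r upd_at big1 ?addr0 // => a /negbTE ->.
by rewrite mul0r.
Qed.

Lemma prod_single (d : 'I_m -> nat) i (P : 'M[K]_(d i)) (a j : tidx d) :
  \prod_l single P l (a l) (j l) = (a == upd j i (a i))%:R * P (a i) (j i).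
Proof.
rewrite (bigD1 i) //= /single dfwith_in mulrC; congr (_ * _).
case: (eqVneq a (upd j i (a i))) => [Ha|Ha].
  apply: big1 => l Hl; rewrite dfwith_out 1?eq_sym // mxE.
  by rewrite {1}Ha upd_out // eqxx.
have [l Hl] : exists l, a l != upd j i (a i) l.
  apply/existsP; apply: contraR Ha => /existsPn H.
  by apply/eqP/ffunP => l; apply/eqP; move: (H l); rewrite negbK.
have Hli : l != i by apply: contraNneq Hl => ->; rewrite upd_at.
rewrite (bigD1 l) //= dfwith_out 1?eq_sym // mxE.
by move: Hl; rewrite upd_out // => /negbTE ->; rewrite mul0r.
Qed.

Lemma tensor_map_single (d : 'I_m -> nat) i (P : 'M[K]_(d i)) (w : tensor K d) :
  (forall a, fiber w i a *m P = fiber w i a) -> tensor_map (single P) w = w.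
Proof.
move=> H; apply/ffunP => j; rewrite ffunE.
under eq_bigr => a _ do rewrite prod_single mulrCA.
rewrite (sum_upd j (fun a x => w a * P x (j i))).
move/matrixP: (H j) => /(_ 0 (j i)); rewrite !mxE upd_id => <-.
by apply: eq_bigr => x _; rewrite mxE.
Qed.

Lemma tensor_map_fix (d : 'I_m -> nat) (P : forall i, 'M[K]_(d i)) (w : tensor K d) :
  (forall i a, fiber w i a *m P i = fiber w i a) -> tensor_map P w = w.
Proof.
move=> H.
pose Pt t := fun l : 'I_m => if (l < t)%N then P l else 1%:M.
suff: forall t, (t <= m)%N -> tensor_map (Pt t) w = w.
  move/(_ m (leqnn m)) => E; rewrite -[RHS]E; apply: tensor_map_ext => l.
  by rewrite /Pt ltn_ord.
elim => [_|t IH Ht].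
  rewrite -{2}(tensor_map1 w); apply: tensor_map_ext => l.
  by rewrite /Pt ltn0.
pose i : 'I_m := Ordinal Ht.
transitivity (tensor_map (single (P i)) (tensor_map (Pt t) w)); last first.
  by rewrite IH ?(ltnW Ht) // tensor_map_single.
rewrite tensor_map_comp; apply: tensor_map_ext => l.
rewrite /Pt /single.
case: (eqVneq i l) => [<-|Hl].
  by rewrite dfwith_in /= ltnSn ltnn mul1mx.
rewrite dfwith_out // mulmx1 ltnS leq_eqVlt.
have -> : (nat_of_ord l == t) = false.
  by apply/negbTE; apply: contra Hl => /eqP Hlt; apply/eqP/val_inj.
by [].
Qed.

Definition flat_le (d : 'I_m -> nat) (k : nat) (w : tensor K d) : Prop :=
  forall i (rs : 'I_k.+1 -> tidx d) (cs : 'I_k.+1 -> 'I_(d i)),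
    \det (\matrix_(r, s) w (upd (rs s) i (cs r))) = 0.

Lemma det_rank_lt n (M : 'M[K]_n) : (\rank M < n)%N -> \det M = 0.
Proof.
move=> H; apply/eqP; apply: contraLR H => H.
have U : M \in unitmx by rewrite unitmxE unitfE.
by rewrite mxrank_unit // ltnn.
Qed.

Lemma rank_flat (d : 'I_m -> nat) k (w : tensor K d) : rank_le k w -> flat_le k w.
Proof.
case=> u -> i rs cs.
pose A : 'M[K]_(k.+1, k) := \matrix_(r, l) u l i 0 (cs r).
pose B : 'M[K]_(k, k.+1) := \matrix_(l, s) \prod_(j | j != i) u l j 0 (rs s j).
have -> : \matrix_(r, s) (\sum_(l < k) pure_tensor (u l)) (upd (rs s) i (cs r)) = A *m B.
  apply/matrixP => r s; rewrite !mxE sum_ffunE; apply: eq_bigr => l _.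
  rewrite !mxE ffunE (bigD1 i) //= upd_at; congr (_ * _).
  by apply: eq_bigr => j Hj; rewrite upd_out.
apply: det_rank_lt; apply: leq_ltn_trans (mxrankM_maxl _ _) _.
by rewrite ltnS rank_leq_col.
Qed.

End T3.

Section T4.
Variables (K : fieldType) (m : nat).

Lemma rank_border (d : 'I_m -> nat) k (w : tensor K d) : rank_le k w -> border_rank_le k w.
Proof. by move=> H p Hp; apply: Hp. Qed.

Lemma tcoordsE (d : 'I_m -> nat) (w : tensor K d) a : tcoords w (enum_rank a) = w a.
Proof. by rewrite /tcoords enum_rankK. Qed.

Lemma border_flat (d : 'I_m -> nat) k (w : tensor K d) : border_rank_le k w -> flat_le k w.
Proof.
move=> H i rs cs.
pose p : {mpoly K[#|{: tidx d}|]} :=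
  \det (\matrix_(r, s) 'X_(enum_rank (upd (rs s) i (cs r)))).
have E : forall t : tensor K d, p.@[tcoords t] = \det (\matrix_(r, s) t (upd (rs s) i (cs r))).
  move=> t; rewrite /p -det_map_mx; congr (\det _); apply/matrixP => r s.
  by rewrite !mxE; apply: (etrans (mevalXU _ _)); rewrite tcoordsE.
rewrite -E; apply: H => t Ht; rewrite E; exact: rank_flat.
Qed.

Lemma border_map (d e : 'I_m -> nat) (phi : forall i, 'M[K]_(d i, e i)) k w :
  border_rank_le k w -> border_rank_le k (tensor_map phi w).
Proof.
move=> H p Hp.
pose lq : #|{: tidx e}|.-tuple {mpoly K[#|{: tidx d}|]} :=
  [tuple \sum_(a : tidx d) 'X_(enum_rank a) *
          (\prod_i phi i (a i) ((enum_val j) i))%:MP | j < #|{: tidx e}|].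
have E : forall t : tensor K d,
    (p \mPo lq).@[tcoords t] = p.@[tcoords (tensor_map phi t)].
  move=> t; rewrite comp_mpoly_meval; apply: meval_eq => j.
  rewrite tnth_mktuple /tcoords ffunE rmorph_sum; apply: eq_bigr => a _.
  by rewrite /= mevalM mevalXU mevalC /tcoords enum_rankK.
rewrite -E; apply: H => t Ht; rewrite E; apply: Hp; exact: rank_le_map.
Qed.

End T4.

Section Compress.
Variables (K : fieldType) (L : eqType) (M d N k : nat) (A : 'M[K]_(M, d)).
Variables (lab : 'I_d -> L) (lam : 'I_N -> L).
Hypothesis rkA : (\rank A <= k)%N.
Hypothesis cnt : forall x, (k <= count (fun b => lam b == lab x) (enum 'I_N))%N.

Definition labs := undup [seq lab x | x <- enum 'I_d].
Definition Dm l : 'M[K]_d := diag_mx (\row_x ((lab x == l)%:R)).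
Definition Tl l := [seq b <- enum 'I_N | lam b == l].
Definition El l := row_base (A *m Dm l).
Definition Jl l : 'M[K]_(\rank (A *m Dm l), N) :=
  \matrix_(t, b) ((b \in Tl l) && (index b (Tl l) == t))%:R.
Definition Phi := \sum_(l <- labs) Dm l *m pinvmx (El l) *m Jl l.
Definition Psi := \sum_(l <- labs) (Jl l)^T *m El l.

Lemma Dm_idem l : Dm l *m Dm l = Dm l.
Proof.
rewrite mul_diag_mx; apply/matrixP => x y; rewrite !mxE.
by case: (lab x == l); case: (x == y); rewrite ?mul1r ?mul0r ?mulr0 ?mulr1.
Qed.

Lemma Dm_sum : \sum_(l <- labs) Dm l = 1%:M.
Proof.
apply/matrixP => x y; rewrite summxE !mxE.
have Hx : lab x \in labs by rewrite mem_undup; apply: map_f; rewrite mem_enum.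
rewrite (bigD1_seq (lab x)) ?undup_uniq //= !mxE eqxx.
rewrite big1_seq ?addr0; first by case: (x == y).
move=> l /andP[Hl _]; by rewrite !mxE eq_sym (negbTE Hl) mul0rn.
Qed.

Lemma El_sub l : (El l <= A *m Dm l)%MS.
Proof. by rewrite /El eq_row_base. Qed.

Lemma El_Dm l : El l *m Dm l = El l.
Proof.
have /submxP [X ->] := El_sub l.
by rewrite -!mulmxA Dm_idem.
Qed.

Lemma Tl_uniq l : uniq (Tl l).
Proof. by rewrite filter_uniq // enum_uniq. Qed.

Lemma Jl_orth l l' : l != l' -> Jl l *m (Jl l')^T = 0.
Proof.
move=> H; apply/matrixP => t t'; rewrite !mxE; apply: big1 => b _.
rewrite !mxE /Tl !mem_filter.
case: (lam b =P l) => [E|]; last by rewrite mul0r.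
case: (lam b =P l') => [E'|]; last by move=> ?; rewrite /= mulr0.
by exfalso; move/eqP: H; apply; rewrite -E -E'.
Qed.

Lemma labsP l : l \in labs -> exists x, l = lab x.
Proof. by rewrite mem_undup => /mapP [x _ ->]; exists x. Qed.

Lemma Jl_id l : l \in labs -> Jl l *m (Jl l)^T = 1%:M.
Proof.
move=> /labsP [x0 Hx0].
have Hs : forall t : 'I_(\rank (A *m Dm l)), (t < size (Tl l))%N.
  move=> t; apply: (leq_trans (ltn_ord t)); apply: leq_trans (mxrankM_maxl _ _) _.
  apply: (leq_trans rkA); rewrite /Tl size_filter Hx0; exact: cnt.
apply/matrixP => t t'; rewrite !mxE.
have Ht := Hs t.
case HT: (Tl l) => [|b1 T']; first by rewrite HT in Ht.
pose bs := nth b1 (Tl l) t.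
have bsT : bs \in Tl l by rewrite mem_nth.
have bsi : index bs (Tl l) = t by rewrite index_uniq ?Tl_uniq.
rewrite (bigD1 bs) //= !mxE bsT bsi eqxx /= big1 ?addr0.
  rewrite mul1r; case: (eqVneq t t') => [->|H]; rewrite ?eqxx //.
  have H' : (t == t' :> nat) = false by apply/negbTE; rewrite val_eqE.
  by rewrite H'.
move=> b Hb; rewrite !mxE.
case: (b \in Tl l) / idP => [bT|]; last by rewrite mul0r.
case: (index b (Tl l) =P t) => [bi|]; last by rewrite mul0r.
by move: Hb; rewrite /bs -bi nth_index // eqxx.
Qed.

Lemma PhiPsi : Phi *m Psi = \sum_(l <- labs) Dm l *m pinvmx (El l) *m El l.
Proof.
rewrite /Phi mulmx_suml; apply: eq_big_seq => l Hl.
rewrite /Psi mulmx_sumr (bigD1_seq l) ?undup_uniq //=.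
rewrite big1_seq ?addr0.
  by rewrite -!mulmxA (mulmxA (Jl l)) Jl_id // mul1mx.
move=> l' /andP [Hl' _].
by rewrite -!mulmxA (mulmxA (Jl l)) Jl_orth 1?eq_sym // mul0mx !mulmx0.
Qed.

Lemma A_PhiPsi : A *m Phi *m Psi = A.
Proof.
rewrite -mulmxA PhiPsi mulmx_sumr.
transitivity (A *m \sum_(l <- labs) Dm l); last by rewrite Dm_sum mulmx1.
rewrite mulmx_sumr; apply: eq_bigr => l _.
rewrite (mulmxA A _ (El l)) (mulmxA A (Dm l)) mulmxKpV //.
by rewrite /El eq_row_base.
Qed.

Lemma Phi_compat x b : lab x != lam b -> Phi x b = 0.
Proof.
move=> H; rewrite /Phi summxE; apply: big1_seq => l _.
rewrite -mulmxA mul_diag_mx mxE mxE.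
case: (lab x =P l) => [E|]; last by rewrite mul0r.
rewrite mul1r mxE; apply: big1 => t _; rewrite /Jl [X in _ * X]mxE /Tl mem_filter.
have Hf : (lam b == l) = false by rewrite -E eq_sym; apply/negbTE.
by rewrite Hf /= mulr0.
Qed.

Lemma El_entry l t x : El l t x = El l t x * (lab x == l)%:R.
Proof.
transitivity ((El l *m Dm l) t x); first by rewrite El_Dm.
by rewrite (mul_mx_diag (El l)) [LHS]mxE [X in _ * X]mxE.
Qed.

Lemma Psi_compat b x : lam b != lab x -> Psi b x = 0.
Proof.
move=> H; rewrite /Psi summxE; apply: big1_seq => l _.
rewrite mxE; apply: big1 => t _.
rewrite El_entry [X in X * _]mxE.
case: (lab x =P l) => [E|]; last by rewrite !mulr0.
have Hf : (lam b == l) = false by rewrite -E; apply/negbTE.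
by rewrite /Jl [X in X * _]mxE /Tl mem_filter Hf /= mul0r.
Qed.

End Compress.

Section Minor.
Variable K : fieldType.

Lemma rank_minor (M n : nat) (A : 'M[K]_(M, n)) k : (k < \rank A)%N ->
  exists (rs : 'I_k.+1 -> 'I_M) (cs : 'I_k.+1 -> 'I_n),
    \det (\matrix_(r, s) A (rs s) (cs r)) != 0.
Proof.
move=> H.
pose f := maxrankfun A.
pose C := rowsub f A.
have Cfree : row_free C by exact: maxrowsub_free.
pose g : 'I_k.+1 -> 'I_(\rank A) := widen_ord H.
pose B := rowsub g C.
pose S := rowsub g (1%:M : 'M[K]_(\rank A)).
have SS : S *m S^T = 1%:M.
  apply/matrixP => s s'; rewrite !mxE.
  rewrite (bigD1 (g s)) //= !mxE eqxx mul1r big1 ?addr0.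
    by rewrite /g -val_eqE /= eq_sym val_eqE.
  by move=> j Hj; rewrite !mxE eq_sym (negbTE Hj) mul0r.
have rkB : \rank B = k.+1.
  rewrite /B rowsubE mxrankMfree //; apply/eqP; rewrite eqn_leq rank_leq_row /=.
  by rewrite -{1}(mxrank1 K k.+1) -SS mxrankM_maxl.
have BT : row_full B^T by rewrite /row_full mxrank_tr rkB.
pose h := fullrankfun BT.
have U := fullrowsub_unit BT.
exists (fun s => f (g s)), (fun r => h r).
rewrite -unitfE -unitmxE.
suff -> : \matrix_(r, s) A (f (g s)) (h r) = rowsub h B^T by [].
by apply/matrixP => r s; rewrite !mxE.
Qed.

End Minor.

Section GA.
Variables (K : fieldType) (m : nat) (d : 'I_m -> nat) (N : nat) (L : eqType).
Variables (lab : forall i, 'I_(d i) -> L) (lam : 'I_N -> L) (k : nat).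
Variable w : tensor K d.

Definition Afib i : 'M[K]_(#|{: tidx d}|, d i) := \matrix_(p, x) w (upd (enum_val p) i x).

Lemma fiber_row i a : fiber w i a = row (enum_rank a) (Afib i).
Proof. by apply/rowP => x; rewrite !mxE enum_rankK. Qed.

Lemma flat_rank i : flat_le k w -> (\rank (Afib i) <= k)%N.
Proof.
move=> F; rewrite leqNgt; apply/negP => /rank_minor [rs [cs]].
have := F i (fun s => enum_val (rs s)) cs.
suff -> : \matrix_(r, s) Afib i (rs s) (cs r) = \matrix_(r, s) w (upd (enum_val (rs s)) i (cs r)).
  by move=> ->; rewrite eqxx.
by apply/matrixP => r s; rewrite !mxE.
Qed.

Lemma GA : flat_le k w ->
  (forall i x, (k <= count (fun b => lam b == @lab i x) (enum 'I_N))%N) ->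
  exists (phi : forall i, 'M[K]_(d i, N)) (psi : forall i, 'M[K]_(N, d i)),
    (forall i x b, @lab i x != lam b -> phi i x b = 0) /\
    (forall i b x, lam b != @lab i x -> psi i b x = 0) /\
    tensor_map psi (tensor_map (e := fun _ => N) phi w) = w.
Proof.
move=> F cnt.
exists (fun i => Phi (Afib i) (@lab i) lam), (fun i => Psi (Afib i) (@lab i) lam).
split; first by move=> i x b; exact: Phi_compat.
split; first by move=> i b x; exact: Psi_compat.
rewrite tensor_map_comp; apply: tensor_map_fix => i a.
rewrite fiber_row -row_mul mulmxA (A_PhiPsi (k := k)) //.
exact: flat_rank.
Qed.

End GA.

Lemma tensor_map_pick (K : fieldType) m (d e : 'I_m -> nat)
   (phi : forall i, 'M[K]_(d i, e i)) (w : tensor K d) (b : tidx e) (y : tidx d) :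
  (forall l x, phi l x (b l) = (x == y l)%:R) -> tensor_map phi w b = w y.
Proof.
move=> H; rewrite ffunE.
under eq_bigr => a _ do under eq_bigr => l _ do rewrite H.
under eq_bigr => a _ do rewrite prod_eq_nat.
rewrite (bigD1 y) //= eqxx mulr1 big1 ?addr0 // => a /negbTE ->.
by rewrite mulr0.
Qed.

Section GB.
Variables (K : fieldType) (m : nat) (d : 'I_m -> nat) (N : nat) (L : eqType).
Variables (lab : forall i, 'I_(d i) -> L) (lam : 'I_N -> L) (k : nat).
Variables (w : tensor K d) (i : 'I_m) (rs : 'I_k.+1 -> tidx d) (cs : 'I_k.+1 -> 'I_(d i)).
Variable b0 : 'I_N.
Hypothesis cnt : forall l x, (k.+1 <= count (fun b => lam b == @lab l x) (enum 'I_N))%N.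

Definition Y l : seq 'I_(d l) := undup [seq upd (rs s) i (cs s) l | s <- enum 'I_k.+1].
Definition Yc l c := [seq y <- Y l | @lab l y == c].
Definition TT c := [seq b <- enum 'I_N | lam b == c].
Definition tau l (y : 'I_(d l)) := nth b0 (TT (@lab l y)) (index y (Yc l (@lab l y))).
Definition phiB l : 'M[K]_(d l, N) := \matrix_(y, b) ((y \in Y l) && (b == tau y))%:R.

Lemma size_Y l : (size (Y l) <= k.+1)%N.
Proof.
apply: leq_trans (size_undup _) _.
by rewrite size_map size_enum_ord.
Qed.

Lemma TT_uniq c : uniq (TT c).
Proof. by rewrite filter_uniq // enum_uniq. Qed.

Lemma Yc_uniq l c : uniq (Yc l c).
Proof. by rewrite filter_uniq // undup_uniq. Qed.

Lemma tau_lt l y : y \in Y l -> (index y (Yc l (@lab l y)) < size (TT (@lab l y)))%N.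
Proof.
move=> Hy.
have Hyc : y \in Yc l (@lab l y) by rewrite mem_filter eqxx.
have H1 : (index y (Yc l (@lab l y)) < size (Yc l (@lab l y)))%N by rewrite index_mem.
apply: leq_trans H1 _.
apply: (@leq_trans (size (Y l))); first by rewrite size_filter count_size.
apply: leq_trans (size_Y l) _.
by rewrite /TT size_filter; exact: cnt.
Qed.

Lemma tau_in l y : y \in Y l -> tau y \in TT (@lab l y).
Proof. by move=> Hy; rewrite /tau mem_nth // tau_lt. Qed.

Lemma tau_lab l y : y \in Y l -> lam (tau y) = @lab l y.
Proof. by move=> /tau_in; rewrite mem_filter => /andP [/eqP]. Qed.

Lemma tau_inj l x y : x \in Y l -> y \in Y l -> tau x = tau y -> x = y.
Proof.
move=> Hx Hy E.
have Ec : @lab l x = @lab l y by rewrite -tau_lab // E tau_lab.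
have Hx' := tau_lt Hx; have Hy' := tau_lt Hy.
move: E Hx'; rewrite /tau Ec => E Hx'.
have Ei : index x (Yc l (@lab l y)) = index y (Yc l (@lab l y)).
  by apply/eqP; rewrite -(nth_uniq b0 Hx' Hy' (TT_uniq _)) E.
have Hxc : x \in Yc l (@lab l y) by rewrite mem_filter Ec eqxx Hx.
have Hyc : y \in Yc l (@lab l y) by rewrite mem_filter eqxx Hy.
by rewrite -(nth_index x Hxc) Ei (nth_index x Hyc).
Qed.

Lemma phiB_col l x y : y \in Y l -> phiB l x (tau y) = (x == y)%:R.
Proof.
move=> Hy; rewrite mxE.
case: (eqVneq x y) => [->|Hxy]; first by rewrite Hy eqxx.
case Hx: (x \in Y l) => //=.
case: (tau y =P tau x) => // E.
by move: Hxy; rewrite (tau_inj Hx Hy (esym E)) eqxx.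
Qed.

Lemma phiB_compat l x b : @lab l x != lam b -> phiB l x b = 0.
Proof.
move=> H; rewrite mxE.
case Hx: (x \in Y l) => //=.
case: (b =P tau x) => // E.
by move: H; rewrite E tau_lab // eqxx.
Qed.

Lemma diag_in l s : upd (rs s) i (cs s) l \in Y l.
Proof. by rewrite mem_undup; apply: map_f; rewrite mem_enum. Qed.

Lemma GB_main : \det (\matrix_(r, s) w (upd (rs s) i (cs r))) != 0 ->
  exists (rs' : 'I_k.+1 -> tidx (fun _ : 'I_m => N)) (cs' : 'I_k.+1 -> 'I_N),
    \det (\matrix_(r, s) (tensor_map (e := fun _ => N) phiB w) (upd (rs' s) i (cs' r))) != 0.
Proof.
move=> H.
exists (fun s => [ffun l => tau (upd (rs s) i (cs s) l)]), (fun r => tau (upd (rs r) i (cs r) i)).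
suff -> : \matrix_(r, s) (tensor_map (e := fun _ => N) phiB w)
      (upd [ffun l => tau (upd (rs s) i (cs s) l)] i (tau (upd (rs r) i (cs r) i)))
    = \matrix_(r, s) w (upd (rs s) i (cs r)) by [].
apply/matrixP => r s; rewrite !mxE; apply: tensor_map_pick => l x.
case: (eqVneq l i) => [El|Hl].
  subst l; rewrite !upd_at phiB_col //; have := diag_in i r; by rewrite upd_at.
rewrite (upd_out _ _ Hl) (@upd_out m (fun _ => N) _ _ _ _ Hl) ffunE phiB_col //.
have := diag_in l s; by rewrite (upd_out _ _ Hl).
exact: diag_in.
Qed.

End GB.

Section Rep.
Variables (K : fieldType) (gT : finGroupType) (G : {group gT}).

Lemma scale_inj (a b : K) n (u : 'rV[K]_n) : u != 0 -> a *: u = b *: u -> a = b.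
Proof.
move=> Hu E; apply/eqP; rewrite -subr_eq0.
have : (a - b) *: u == 0 by rewrite scalerBl E subrr.
by rewrite scaler_eq0 (negbTE Hu) orbF.
Qed.

Lemma eig_mult d (rG : mx_representation K G d) (u : 'rV[K]_d) (c : gT -> K) :
  u != 0 -> (forall g, g \in G -> u *m rG g = c g *: u) ->
  (forall g h, g \in G -> h \in G -> c (g * h)%g = c g * c h) /\ c 1%g = 1.
Proof.
move=> Hu H; split.
  move=> g h Hg Hh; apply: (scale_inj Hu).
  by rewrite -H ?groupM // repr_mxM // mulmxA H // -scalemxAl H // scalerA.
apply: (scale_inj Hu); rewrite -H // repr_mx1 mulmx1 scale1r.
by [].
Qed.

Lemma eig_unit d (rG : mx_representation K G d) (u : 'rV[K]_d) (c : gT -> K) :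
  u != 0 -> (forall g, g \in G -> u *m rG g = c g *: u) ->
  forall g, g \in G -> c g * c (g^-1)%g = 1.
Proof.
move=> Hu H g Hg; have [M1 M2] := eig_mult Hu H.
by rewrite -M1 ?groupV // mulgV.
Qed.

Lemma eigenbasis d (rG : mx_representation K G d) :
  reps_split_into_lines K G ->
  exists (P : 'M[K]_d) (chi : 'I_d -> gT -> K), P \in unitmx /\
    forall x g, g \in G -> row x P *m rG g = chi x g *: row x P.
Proof.
move=> /(_ d rG) [I [U [HU [Hsum Hdir]]]].
have rk1 : forall i, \rank (U i) = 1%N by move=> i; case: (HU i).
have HI : #|I| = d.
  have := Hdir; rewrite mxdirectE /= => /eqP E.
  rewrite -(mxrank1 K d) -(eqmx_rank Hsum) E.
  by rewrite (eq_bigr (fun _ => 1%N)) ?sum1_card // => i _; rewrite rk1.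
pose e (x : 'I_d) : I := enum_val (cast_ord (esym HI) x).
pose u i := nz_row (U i).
pose P : 'M[K]_d := \matrix_(x, y) u (e x) 0 y.
have rowP x : row x P = u (e x) by apply/rowP => y; rewrite !mxE.
have Unz : forall i, U i != 0 by move=> i; rewrite -mxrank_eq0 rk1.
have unz : forall i, u i != 0 by move=> i; rewrite nz_row_eq0.
have Uu : forall i, (U i <= u i)%MS.
  move=> i; have := (mxrank_leqif_eq (nz_row_sub (U i))).2; rewrite -/(u i).
  have -> : \rank (u i) = 1%N.
    by apply/eqP; rewrite eqn_leq rank_leq_row lt0n mxrank_eq0 unz.
  by rewrite rk1 eqxx => /esym /andP [].
exists P, (fun x g => ((u (e x) *m rG g) *m pinvmx (u (e x))) 0 0).
split.
  rewrite -row_full_unit -sub1mx.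
  case/andP: Hsum => _ H1; apply: submx_trans H1 _.
  apply/sumsmx_subP => i _; apply: submx_trans (Uu i) _.
  have -> : u i = row (cast_ord HI (enum_rank i)) P.
    by rewrite rowP /e cast_ordK enum_rankK.
  exact: row_sub.
move=> x g Hg; rewrite rowP.
have : (u (e x) *m rG g <= u (e x))%MS.
  apply: submx_trans (submxMr _ (nz_row_sub _)) _.
  apply: submx_trans (Uu (e x)).
  have /mxsimple_module /mxmoduleP := (HU (e x)).1.
  by move/(_ g Hg).
move/mulmxKpV => {1}<-.
by rewrite {1}[_ *m pinvmx _]mx11_scalar mul_scalar_mx.
Qed.
End Rep.

Section Rep2.
Variables (K : fieldType) (gT : finGroupType) (G : {group gT}).

Definition glab (f : gT -> K) : {ffun gT -> K} := [ffun g => if g \in G then f g else 0].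

Lemma glabE f1 f2 g : g \in G -> glab f1 = glab f2 -> f1 g = f2 g.
Proof. by move=> Hg /ffunP /(_ g); rewrite !ffunE Hg. Qed.

Lemma eig_diag N (P : 'M[K]_N) (rW : mx_representation K G N) (lam : 'I_N -> gT -> K) g :
  (forall b, row b P *m rW g = lam b g *: row b P) ->
  P *m rW g = diag_mx (\row_b lam b g) *m P.
Proof.
move=> H; apply/row_matrixP => b; rewrite row_mul H mul_diag_mx.
by apply/rowP => y; rewrite !mxE.
Qed.

Lemma compat_Glinear (rA rB : representation K G) (PA : 'M[K]_(rdegree rA)) chiA
   (PB : 'M[K]_(rdegree rB)) chiB (M : 'M[K]_(rdegree rA, rdegree rB)) :
  PA \in unitmx -> PB \in unitmx ->
  (forall x g, g \in G -> row x PA *m rA g = chiA x g *: row x PA) ->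
  (forall x g, g \in G -> row x PB *m rB g = chiB x g *: row x PB) ->
  (forall x b, glab (chiA x) != glab (chiB b) -> M x b = 0) ->
  Glinear (invmx PA *m M *m PB).
Proof.
move=> UA UB HA HB HM g Hg.
have EA := eig_diag (fun x => HA x g Hg); have EB := eig_diag (fun x => HB x g Hg).
have EA' : rA g = invmx PA *m diag_mx (\row_b chiA b g) *m PA.
  by rewrite -mulmxA -EA mulmxA mulVmx // mul1mx.
have DM : diag_mx (\row_b chiA b g) *m M = M *m diag_mx (\row_b chiB b g).
  rewrite mul_diag_mx mul_mx_diag; apply/matrixP => x b; rewrite !mxE.
  case: (eqVneq (glab (chiA x)) (glab (chiB b))) => [E|E].
    by rewrite (glabE Hg E) mulrC.
  by rewrite HM // mulr0 mul0r.
rewrite EA' -(mulmxA (invmx PA *m M) PB) EB !mulmxA.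
rewrite -(mulmxA _ PA (invmx PA)) mulmxV // mulmx1 -(mulmxA (invmx PA) _ M) DM.
by rewrite !mulmxA.
Qed.

Lemma reg_eig (c : gT -> K) :
  (forall g h, g \in G -> h \in G -> c (g * h)%g = c g * c h) -> c 1%g = 1 ->
  exists v : 'rV[K]_(rdegree (regRep K G)), v != 0 /\
    forall g, g \in G -> v *m regRep K G g = c g *: v.
Proof.
move=> Cm C1.
exists (\row_j c ((enum_val j)^-1)%g); split.
  apply/eqP => /rowP /(_ (gring_index G 1)); rewrite !mxE gring_indexK // invg1 C1.
  by move/eqP; rewrite oner_eq0.
move=> x Hx; apply/rowP => j; rewrite !mxE.
pose i0 := gring_index G (enum_val j * x^-1)%g.
have Hj : enum_val j \in G by exact: enum_valP.
have Ei0 : enum_val i0 = (enum_val j * x^-1)%g by rewrite gring_indexK // groupM ?groupV.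
rewrite (bigD1 i0) //= !mxE Ei0 -mulgA mulVg mulg1 gring_valK eqxx /= mulr_natr eqxx mulr1n.
rewrite big1 ?addr0.
  by rewrite invMg invgK Cm ?groupV.
move=> i Hi; rewrite !mxE /=.
case: (j =P gring_index G (enum_val i * x)%g) => [E|]; last by rewrite mulr0.
case/eqP: Hi; apply: (can_inj gring_valK); rewrite /i0.
rewrite gring_indexK ?groupM ?groupV ?enum_valP // E gring_indexK ?groupM ?enum_valP // -mulgA mulgV mulg1.
done.
Qed.

End Rep2.

Section Rep3.
Variables (K : fieldType) (gT : finGroupType) (G : {group gT}).

Lemma dadd_apply (rA rB : representation K G) g :
  dadd_grepr rA rB g = block_mx (rA g) 0 0 (rB g).
Proof. by []. Qed.

Lemma pow_eig (c : gT -> K) :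
  (forall g h, g \in G -> h \in G -> c (g * h)%g = c g * c h) -> c 1%g = 1 ->
  forall n, exists X : 'M[K]_(n, rdegree (regRepPow K G n)), row_free X /\
    forall g, g \in G -> X *m regRepPow K G n g = c g *: X.
Proof.
move=> Cm C1; have [v [vnz Hv]] := reg_eig Cm C1.
elim => [|n [X [FX HX]]].
  exists 0; split; first by rewrite /row_free mxrank0.
  by move=> g _; apply/matrixP => [[]].
rewrite /regRepPow /muln_grepr big_ord_recl.
exists (block_mx v 0 0 X : 'M_(1 + n, _)); split.
  by rewrite /row_free; move: (rank_diag_block_mx v X); rewrite rank_rV vnz (eqP FX) => ->.
move=> g Hg; rewrite dadd_apply.
apply: (etrans (@mulmx_block _ 1 n _ _ _ _ v 0 0 X _ _ _ _)).
rewrite !(mulmx0, mul0mx, addr0, add0r) Hv //.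
rewrite HX //; symmetry; apply: (etrans (@scale_block_mx _ 1 n _ _ (c g) v 0 0 X)).
by rewrite !scaler0.
Qed.

Lemma eig_count N (Q : 'M[K]_N) (rW : mx_representation K G N)
   (lam : 'I_N -> gT -> K) (c : gT -> K) n (X : 'M[K]_(n, N)) :
  Q \in unitmx -> (forall b g, g \in G -> row b Q *m rW g = lam b g *: row b Q) ->
  row_free X -> (forall g, g \in G -> X *m rW g = c g *: X) ->
  (n <= count (fun b => glab G (lam b) == glab G c) (enum 'I_N))%N.
Proof.
move=> UQ HQ FX HX.
set sel := fun b => glab G (lam b) == glab G c.
have [C defC] : {C : 'M[K]_(n, N) | C = X *m invmx Q} by exists (X *m invmx Q).
have rkC : \rank C = n.
  by rewrite defC mxrankMfree ?(eqP FX) // row_free_unit unitmx_inv.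
have C0 : forall s b, ~~ sel b -> C s b = 0.
  move=> s b Hb.
  have [g /andP [Hg Hne]] : exists g, (g \in G) && (lam b g != c g).
    apply/existsP; apply: contraR Hb => /existsPn H; apply/eqP/ffunP => g.
    rewrite !ffunE; case Hg: (g \in G) => //.
    by move: (H g); rewrite Hg /= negbK => /eqP.
  have E : C *m diag_mx (\row_b lam b g) = c g *: C.
    apply: (can_inj (mulmxK UQ)).
    rewrite -mulmxA -(eig_diag (fun b => HQ b g Hg)) mulmxA defC mulmxKV //.
    by rewrite HX // -scalemxAl mulmxKV.
  move/matrixP: E => /(_ s b); rewrite mul_mx_diag !mxE => E.
  have : C s b * (lam b g - c g) == 0 by rewrite mulrBr E mulrC subrr.
  by rewrite mulf_eq0 subr_eq0 (negbTE Hne) orbF => /eqP.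
pose T := [seq b <- enum 'I_N | sel b].
have UT : uniq T by rewrite filter_uniq // enum_uniq.
pose S : 'M[K]_(size T, N) := \matrix_(t, b) (b == tnth (in_tuple T) t)%:R.
have CS : C *m S^T *m S = C.
  apply/matrixP => s b; rewrite !mxE.
  under eq_bigr => t _ do rewrite !mxE.
  have inner : forall t : 'I_(size T),
      \sum_j C s j * S^T j t = C s (tnth (in_tuple T) t).
    move=> t; rewrite (bigD1 (tnth (in_tuple T) t)) //= big1 ?addr0.
      by rewrite [X in _ * X]mxE [X in _ * X]mxE eqxx mulr1.
    by move=> j /negbTE Hj; rewrite [X in _ * X]mxE [X in _ * X]mxE Hj mulr0.
  under eq_bigr => t _ do rewrite inner.
  case Hb: (b \in T).
    have Hi : (index b T < size T)%N by rewrite index_mem.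
    pose t0 := Ordinal Hi.
    have Et0 : tnth (in_tuple T) t0 = b by rewrite (tnth_nth b) /= nth_index.
    rewrite (bigD1 t0) //= Et0 eqxx mulr1 big1 ?addr0 // => t Ht.
    case: (b =P tnth (in_tuple T) t) => [Eb|]; last by rewrite mulr0.
    case/eqP: Ht; apply: val_inj => /=.
    by rewrite Eb (tnth_nth b) /= index_uniq.
  rewrite C0; last by move: Hb; rewrite /T mem_filter mem_enum andbT => ->.
  apply: big1 => t _.
  case: (b =P tnth (in_tuple T) t) => [Eb|]; last by rewrite mulr0.
  by move: Hb; rewrite Eb mem_tnth.
suff : (n <= size T)%N by rewrite /T size_filter.
rewrite -rkC -CS; apply: leq_trans (mxrankM_maxr _ _) _.
exact: rank_leq_row.
Qed.

End Rep3.

Lemma unit_row_nz (K : fieldType) n (P : 'M[K]_n) x : P \in unitmx -> row x P != 0.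
Proof.
move=> U; apply/eqP => E.
have : (delta_mx 0 x : 'rV[K]_n) *m P = 0 *m P by rewrite -rowE E mul0mx.
have FP : row_free P by rewrite row_free_unit.
move/(row_free_inj FP) => /matrixP /(_ 0 x).
by rewrite !mxE !eqxx /= => /eqP; rewrite oner_eq0.
Qed.

Section Main.
Variables (K : fieldType) (gT : finGroupType) (G : {group gT}).
Variable Ksplit : reps_split_into_lines K G.
Variables (m k : nat) (V : 'I_m -> representation K G).
Variable w : tensor K (fun i => rdegree (V i)).
Variable PC : forall i : 'I_m, ('M[K]_(rdegree (V i)) * ('I_(rdegree (V i)) -> gT -> K))%type.
Variable HPC : forall i, (PC i).1 \in unitmx /\
   forall x g, g \in G -> row x (PC i).1 *m V i g = (PC i).2 x g *: row x (PC i).1.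

Definition PP i := (PC i).1.
Definition chi i := (PC i).2.
Arguments PP : clear implicits.
Arguments chi : clear implicits.
Definition labV i (x : 'I_(rdegree (V i))) := glab G (chi i x).
Definition w' := tensor_map (fun i => invmx (PP i)) w.

Lemma w'K : tensor_map PP w' = w.
Proof.
rewrite /w' tensor_map_comp -{2}(tensor_map1 w); apply: tensor_map_ext => i.
by rewrite mulVmx //; case: (HPC i).
Qed.

Lemma target n0 : exists (Q : 'M[K]_(rdegree (regRepPow K G n0))) lam,
  Q \in unitmx /\
  (forall b g, g \in G -> row b Q *m regRepPow K G n0 g = lam b g *: row b Q) /\
  (forall i x, (n0 <= count (fun b => glab G (lam b) == @labV i x) (enum 'I_(rdegree (regRepPow K G n0))))%N).
Proof.
have [Q [lam [UQ HQ]]] := eigenbasis (regRepPow K G n0) Ksplit.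
exists Q, lam; split => //; split => // i x.
have [UP HP] := HPC i.
have nz := unit_row_nz x UP.
have [Cm C1] := eig_mult nz (HP x).
have [X [FX HX]] := pow_eig Cm C1 n0.
exact: (eig_count UQ HQ FX HX).
Qed.

Lemma key1 n0 : flat_le k w' -> (k <= n0)%N ->
  exists (phi : forall i, 'M[K]_(rdegree (V i), rdegree (regRepPow K G n0)))
         (psi : forall i, 'M[K]_(rdegree (regRepPow K G n0), rdegree (V i))),
    (forall i, Glinear (phi i) /\ Glinear (psi i)) /\
    tensor_map psi (tensor_map (e := fun _ => rdegree (regRepPow K G n0)) phi w) = w.
Proof.
move=> F kn.
have [Q [lam [UQ [HQ cnt]]]] := target n0.
have cnt' : forall i x, (k <= count (fun b => glab G (lam b) == @labV i x)
     (enum 'I_(rdegree (regRepPow K G n0))))%N.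
  by move=> i x; apply: leq_trans kn (cnt i x).
have [phi' [psi' [Cphi [Cpsi E]]]] := GA F cnt'.
exists (fun i => invmx (PP i) *m phi' i *m Q), (fun i => invmx Q *m psi' i *m PP i).
split.
  move=> i; have [UP HP] := HPC i; split.
    apply: (compat_Glinear UP UQ HP HQ) => x b; exact: Cphi.
  apply: (compat_Glinear UQ UP HQ HP) => b x; exact: Cpsi.
rewrite tensor_map_comp.
transitivity (tensor_map PP (tensor_map psi' (tensor_map phi' w'))); last by rewrite E w'K.
rewrite /w' !tensor_map_comp; apply: tensor_map_ext => i.
by rewrite !mulmxA (mulmxK UQ).
Qed.

Lemma key2 n0 : (k.+1 <= n0)%N ->
  (forall phi : forall i : 'I_m, 'M[K]_(rdegree (V i), rdegree (regRepPow K G n0)),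
     (forall i, Glinear (phi i)) ->
     border_rank_le k (tensor_map (e := fun _ => rdegree (regRepPow K G n0)) phi w)) ->
  flat_le k w'.
Proof.
move=> kn H i rs cs.
case: (eqVneq (\det (\matrix_(r, s) w' (upd (rs s) i (cs r)))) 0) => // Hdet.
exfalso.
have [Q [lam [UQ [HQ cnt]]]] := target n0.
have cnt' : forall l x, (k.+1 <= count (fun b => glab G (lam b) == @labV l x)
     (enum 'I_(rdegree (regRepPow K G n0))))%N.
  by move=> l x; apply: leq_trans kn (cnt l x).
have : has (fun b => glab G (lam b) == @labV i (cs ord0)) (enum 'I_(rdegree (regRepPow K G n0))).
  by rewrite has_count; apply: leq_trans (cnt' i (cs ord0)).
case/hasP => b0 _ _.
have [rs' [cs' Hdet']] := GB_main (lam := fun b => glab G (lam b)) b0 cnt' Hdet.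
set phiB' := phiB _ _ _ _ _ _ in Hdet'.
pose phi := fun l => invmx (PP l) *m phiB' l *m Q.
have Gphi : forall l, Glinear (phi l).
  move=> l; have [UP HP] := HPC l.
  apply: (compat_Glinear UP UQ HP HQ) => x b; exact: phiB_compat.
have B := border_map (fun l => invmx Q) (H phi Gphi).
have Ftm := border_flat B.
move: Hdet'; rewrite (_ : tensor_map phiB' w' = tensor_map (fun l => invmx Q) (tensor_map phi w)).
  by rewrite Ftm eqxx.
rewrite /w' !tensor_map_comp; apply: tensor_map_ext => l.
by rewrite /phi -!mulmxA mulmxV // mulmx1.
Qed.

End Main.


Theorem lemma3p1 (K : fieldType) (gT : finGroupType) (G : {group gT})
    (abG : abelian G) (Kinf : infinite_field K)
    (Ksplit : reps_split_into_lines K G)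
    (m k n : nat) (hn : (k + 1 <= n)%N)
    (V : 'I_m -> representation K G)
    (w : tensor K (fun i => rdegree (V i))) :
  (rank_le k w <->
     forall phi : forall i : 'I_m, 'M[K]_(rdegree (V i), rdegree (regRepPow K G n)),
       (forall i, Glinear (phi i)) ->
       rank_le k (tensor_map (e := fun _ => rdegree (regRepPow K G n)) phi w)) /\
  (border_rank_le k w <->
     forall phi : forall i : 'I_m, 'M[K]_(rdegree (V i), rdegree (regRepPow K G n)),
       (forall i, Glinear (phi i)) ->
       border_rank_le k (tensor_map (e := fun _ => rdegree (regRepPow K G n)) phi w)) /\
  (border_rank_le k w ->
     exists (phi : forall i : 'I_m, 'M[K]_(rdegree (V i), rdegree (regRepPow K G k)))
            (psi : forall i : 'I_m, 'M[K]_(rdegree (regRepPow K G k), rdegree (V i))),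
       (forall i, Glinear (phi i) /\ Glinear (psi i)) /\
       tensor_map psi (tensor_map (e := fun _ => rdegree (regRepPow K G k)) phi w) = w).
Proof.
have [PC HPC] : exists PC : forall i : 'I_m,
    ('M[K]_(rdegree (V i)) * ('I_(rdegree (V i)) -> gT -> K))%type,
    forall i, (PC i).1 \in unitmx /\
      forall x g, g \in G -> row x (PC i).1 *m V i g = (PC i).2 x g *: row x (PC i).1.
  apply: (@fin_all_exists _ (fun i => ('M[K]_(rdegree (V i)) * ('I_(rdegree (V i)) -> gT -> K))%type)
     (fun i p => p.1 \in unitmx /\
       forall x g, g \in G -> row x p.1 *m V i g = p.2 x g *: row x p.1)) => i.
  have [P [c [UP HP]]] := eigenbasis (V i) Ksplit.
  by exists (P, c).
have hn' : (k.+1 <= n)%N by rewrite -addn1.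
have kn : (k <= n)%N by apply: ltnW.
split; [split|split; [split|]].
- by move=> Hr phi _; exact: rank_le_map.
- move=> H.
  have F := key2 Ksplit HPC hn' (fun phi Hphi => rank_border (H phi Hphi)).
  have [phi [psi [Hl E]]] := key1 Ksplit HPC F kn.
  rewrite -E; apply: rank_le_map; apply: H => i; exact: (Hl i).1.
- by move=> Hr phi _; exact: border_map.
- move=> H.
  have F := key2 Ksplit HPC hn' H.
  have [phi [psi [Hl E]]] := key1 Ksplit HPC F kn.
  rewrite -E; apply: border_map; apply: H => i; exact: (Hl i).1.
- move=> Hb.
  have F : flat_le k (w' w PC) by apply: border_flat; apply: border_map.
  exact: (key1 Ksplit HPC F (leqnn k)).
Qed.
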